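(* There is a constant $c>0$ such that for every unit interval graph $G=(V,E)$ with $N=|V|\ge 2$ nodes, labeled $v_0,\dots,v_{N-1}$ in increasing order of the left endpoints of their intervals, the minimal $\pi$-OBDD representing $\chi_E$ has at most $c\,N/\log N$ nodes, where $\pi$ is the $2$-interleaved variable order with decreasing significance.
   Context: A unit interval graph on $N$ nodes is given by intervals $[a_i,a_i+1]$, $0\le i\le N-1$; two distinct nodes are adjacent iff their intervals intersect. Without loss of generality all endpoints are distinct, and the nodes are labeled so that $a_0<a_1<\dots<a_{N-1}$. Let $n=\lceil\log_2 N\rceil$. For $x=(x_0,\dots,x_{n-1})\in\{0,1\}^n$ put $|x|=\sum_{i=0}^{n-1}x_i2^i$. The characteristic function $\chi_E:\{0,1\}^{2n}\to\{0,1\}$ is defined by $\chi_E(x,y)=1$ iff $|x|,|y|<N$ and $\{v_{|x|},v_{|y|}\}\in E$. A $\pi$-OBDD for a variable order $\pi$ (a linear order of the input variables) is a directed acyclic rooted graph with two sinks labeled $0$ and $1$. Every inner node is labeled by a variable and has two outgoing edges labeled $0$ and $1$, and along every edge the variables respect $\pi$. An assignment determines a path from the root by following, at each node labeled $x_i$, the edge labeled by the value of $x_i$. The OBDD represents $f$ if this path always ends in the sink labeled $f(\text{assignment})$. The size of an OBDD is its number of nodes. The $2$-interleaved variable order with decreasing significance on $x,y\in\{0,1\}^n$ is $(x_{n-1},y_{n-1},x_{n-2},y_{n-2},\dots,x_0,y_0)$. *)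

(* Defs.v *)
From HB Require Import structures.
From mathcomp Require Import all_boot all_order all_algebra.
Set Implicit Arguments. Unset Strict Implicit. Unset Printing Implicit Defensive.
Import Order.TTheory GRing.Theory Num.Theory.

(* An OBDD with m inner nodes 'I_m and two sinks (inl false / inl true).
   A node reference is [inl b] (the sink labeled b) or [inr i] (inner node i). *)
Record obdd (V : finType) (m : nat) := Obdd {
  ob_var  : 'I_m -> V;
  ob_lo   : 'I_m -> (bool + 'I_m)%type;
  ob_hi   : 'I_m -> (bool + 'I_m)%type;
  ob_root : (bool + 'I_m)%type
}.

(* size = number of nodes = inner nodes + the two sinks *)
Definition obdd_size (V : finType) (m : nat) (B : obdd V m) : nat := m + 2.

Definition ob_edge (V : finType) (m : nat) (B : obdd V m) : rel (bool + 'I_m)%type :=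
  fun u v => match u with
             | inl _ => false
             | inr i => (v == ob_lo B i) || (v == ob_hi B i)
             end.

(* B is a pi-OBDD, where the linear order pi on the variables is given by an
   injective rank function rk (position of a variable in pi):
   - rooted: every inner node is reachable from the root;
   - along every edge between inner nodes the variables strictly respect pi
     (this also makes the graph acyclic). *)
Definition is_pi_obdd (V : finType) (rk : V -> nat) (m : nat) (B : obdd V m) : Prop :=
  (forall i : 'I_m, connect (ob_edge B) (ob_root B) (inr i)) /\
  (forall i j : 'I_m, (ob_lo B i = inr j \/ ob_hi B i = inr j) ->
       rk (ob_var B i) < rk (ob_var B j)).

Fixpoint ob_eval_ref (V : finType) (m : nat) (B : obdd V m) (fuel : nat)
    (r : (bool + 'I_m)%type) (x : V -> bool) : bool :=
  match r with
  | inl b => b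
  | inr i => match fuel with
             | 0 => false
             | k.+1 => ob_eval_ref B k (if x (ob_var B i) then ob_hi B i else ob_lo B i) x
             end
  end.

(* In a pi-OBDD a path visits at most m inner nodes, so fuel m suffices. *)
Definition ob_eval (V : finType) (m : nat) (B : obdd V m) (x : V -> bool) : bool :=
  ob_eval_ref B m (ob_root B) x.

Definition represents (V : finType) (m : nat) (B : obdd V m) (f : (V -> bool) -> bool) : Prop :=
  forall x : V -> bool, ob_eval B x = f x.

(* Input variables for x,y in {0,1}^n: (false, i) is x_i, (true, i) is y_i. *)
Definition xyvar (n : nat) : finType := (bool * 'I_n)%type.

Definition binval (n : nat) (x : 'I_n -> bool) : nat := \sum_(i < n) x i * 2 ^ i.

(* 2-interleaved order with decreasing significance:
   x_{n-1}, y_{n-1}, x_{n-2}, y_{n-2}, ..., x_0, y_0.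
   Position of x_i is 2(n-1-i), position of y_i is 2(n-1-i)+1. *)
Definition interleaved_rank (n : nat) (v : xyvar n) : nat :=
  (n.-1 - v.2).*2 + v.1.

Definition nbits (N : nat) : nat := up_log 2 N.

(* Unit interval graph given by intervals [a_i, a_i + 1], i < N:
   distinct nodes i, j are adjacent iff the intervals intersect. *)
Definition uig_adj (R : realFieldType) (a : nat -> R) (i j : nat) : bool :=
  (i != j) && (`|a i - a j| <= 1)%R.

Definition chiE (R : realFieldType) (a : nat -> R) (N : nat)
    (z : xyvar (nbits N) -> bool) : bool :=
  let X := binval (fun i => z (false, i)) in
  let Y := binval (fun i => z (true, i)) in
  [&& X < N, Y < N & uig_adj a X Y].

(* Main.v *)
Require Import Defs.
From HB Require Import structures.
From mathcomp Require Import all_boot all_order all_algebra.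
From mathcomp Require Import zify lra ring.
Set Implicit Arguments. Unset Strict Implicit. Unset Printing Implicit Defensive.
Import Order.TTheory GRing.Theory Num.Theory.


Section Generic.
Variables (V : finType) (rk : V -> nat) (K : nat) (vs : nat -> V) (F : (V -> bool) -> bool).
Hypothesis K_gt0 : 0 < K.
Hypothesis rk_vs : forall k, k < K -> rk (vs k) = k.
Hypothesis rk_lt : forall v, rk v < K.
Hypothesis vs_rk : forall v, vs (rk v) = v.
Hypothesis Fext : forall z z', (forall v, z v = z' v) -> F z = F z'.

Definition asg := {ffun V -> bool}.
Definition sfun := {ffun asg -> bool}.

Definition mix (k : nat) (w z : asg) : V -> bool := fun v => if rk v < k then w v else z v.
Definition restr k (w : asg) : sfun := [ffun z => F (mix k w z)].
Definition SubF k : {set sfun} := [set restr k w | w : asg].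
Lemma restr_in k w : restr k w \in SubF k.
Proof. by apply/imsetP; exists w. Qed.
Definition upd (z : asg) (v : V) (b : bool) : asg := [ffun u => if u == v then b else z u].
Definition child (k : nat) (g : sfun) (b : bool) : sfun := [ffun z => g (upd z (vs k) b)].

Lemma childP k w b : k < K -> child k (restr k w) b = restr k.+1 (upd w (vs k) b).
Proof.
move=> kK; apply/ffunP => z; rewrite !ffunE; apply: Fext => v.
rewrite /mix !ffunE.
have [vk|nvk] := eqVneq v (vs k).
  by rewrite vk rk_vs // ltnn ltnSn.
have nk : rk v != k.
  by apply/eqP => e; move: nvk; rewrite -e vs_rk eqxx.
by rewrite ltnS [rk v <= k]leq_eqVlt (negbTE nk).
Qed.

Lemma upd_id (w : asg) v : upd w v (w v) = w.
Proof. by apply/ffunP => u; rewrite ffunE; case: eqP => // ->. Qed.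

Lemma restrS k w : k < K -> restr k.+1 w = child k (restr k w) (w (vs k)).
Proof. by move=> kK; rewrite childP // upd_id. Qed.

Lemma restr0 w w' : restr 0 w = restr 0 w'.
Proof. by apply/ffunP => z; rewrite !ffunE. Qed.

Lemma restrK k w z z' : K <= k -> restr k w z = restr k w z'.
Proof. by move=> Kk; rewrite !ffunE; apply: Fext => v; rewrite /mix (leq_trans (rk_lt v) Kk). Qed.

Lemma child_Sub k g b : k < K -> g \in SubF k -> child k g b \in SubF k.+1.
Proof. by move=> kK /imsetP[w _ ->]; rewrite childP //; apply: restr_in. Qed.

Lemma card_SubS k : k < K -> #|SubF k.+1| <= 2 * #|SubF k|.
Proof.
move=> kK.
have sub : SubF k.+1 \subset [set child k gb.1 gb.2 | gb in setX (SubF k) [set: bool]].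
  apply/subsetP => g /imsetP[w _ ->]; rewrite restrS //.
  by apply/imsetP; exists (restr k w, w (vs k)) => //; rewrite !inE restr_in.
apply: leq_trans (subset_leq_card sub) _.
by rewrite (leq_trans (leq_imset_card _ _)) // cardsX cardsT card_bool mulnC.
Qed.

Definition NT := ('I_K * sfun)%type.
Definition NS : {set NT} := [set u : NT | u.2 \in SubF u.1].
Definition w0 : asg := [ffun _ => false].
Definition u0 : NT := (Ordinal K_gt0, restr 0 w0).
Lemma u0_in : u0 \in NS.
Proof. by rewrite inE restr_in. Qed.

Definition m := #|NS|.
Definition idx (u : NT) : 'I_m := enum_rank_in u0_in u.

Definition ev (i : 'I_m) : NT := @enum_val _ (pred_of_set NS) i.
Lemma ev_in i : ev i \in NS.
Proof. exact: enum_valP. Qed.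

Definition tgt (u : NT) (b : bool) : (bool + 'I_m)%type :=
  match insub (u.1 : nat).+1 with
  | Some k' => inr (idx (k', child u.1 u.2 b))
  | None => inl (child u.1 u.2 b w0)
  end.

Definition BB : obdd V m :=
  Obdd (fun i => vs (ev i).1) (fun i => tgt (ev i) false)
       (fun i => tgt (ev i) true) (inr (idx u0)).

Lemma idxK u : u \in NS -> ev (idx u) = u.
Proof. by move=> uN; rewrite /ev /idx; apply: enum_rankK_in. Qed.

Lemma evK i : idx (ev i) = i.
Proof. by rewrite /idx /ev; apply: enum_valK_in. Qed.

Lemma tgt_in u b : u \in NS -> forall k' : 'I_K, k' = (u.1).+1 :> nat ->
   (k', child u.1 u.2 b) \in NS.
Proof.
case: u => k g /=; rewrite inE /= => gS k' ek'.
by rewrite inE /= ek'; apply: child_Sub.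
Qed.

Lemma eval_node fuel (u : NT) (x : V -> bool) : u \in NS -> K - u.1 <= fuel ->
  ob_eval_ref BB fuel (inr (idx u)) x = u.2 (finfun x).
Proof.
elim: fuel u => [|fuel IH] [k g] uN hf.
  by move: hf (ltn_ord k) => /=; lia.
rewrite /= idxK //=.
set b := x (vs k).
have -> : (if b then tgt (k, g) true else tgt (k, g) false) = tgt (k, g) b by case: b.
rewrite /tgt /=.
case: insubP => [k' _ ek'|nk].
  rewrite IH; last first.
    - by rewrite ek'; move: hf => /=; lia.
    - by apply: (tgt_in b uN).
  rewrite /= ffunE; congr (g _); apply/ffunP => v; rewrite !ffunE.
  by case: eqP => // ->.
have eK : k.+1 = K by move: nk (ltn_ord k); lia.
move: uN; rewrite inE /= => /imsetP[w _ ->].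
rewrite /= childP // (restrK _ _ (finfun x)) ?eK //.
have -> : restr K (upd w (vs k) b) = child k (restr k w) b by rewrite childP // eK.
rewrite /= ffunE.
have -> : upd (finfun x) (vs k) b = finfun x.
  by apply/ffunP => v; rewrite !ffunE; case: eqP => // ->.
by case: fuel {IH hf}.
Qed.

Lemma K_le_m : K <= m.
Proof.
have sub : [set (k, restr k w0) | k : 'I_K] \subset NS.
  by apply/subsetP => u /imsetP[k _ ->]; rewrite inE restr_in.
rewrite /m; apply: leq_trans (subset_leq_card sub); rewrite card_imset ?card_ord //.
by move=> k1 k2 [].
Qed.

Lemma BB_represents : represents BB F.
Proof.
move=> x; rewrite /ob_eval /= eval_node ?u0_in //; last first.
  by rewrite /= subn0 K_le_m.
by rewrite /= ffunE; apply: Fext => v; rewrite /mix ffunE.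
Qed.

Lemma BB_connect (k : nat) (hk : k < K) w :
  connect (ob_edge BB) (ob_root BB) (inr (idx (Ordinal hk, restr k w))).
Proof.
elim: k hk w => [|k IH] hk w.
  rewrite /= (restr0 w w0) (_ : Ordinal hk = Ordinal K_gt0) //; exact: val_inj.
have hk' : k < K by apply: ltnW.
apply: connect_trans (IH hk' w) _; apply: connect1.
have uN : (Ordinal hk', restr k w) \in NS by rewrite inE restr_in.
rewrite /= idxK // /tgt /=.
rewrite (insubT (fun i => i < K) hk) /=.
rewrite (restrS w hk'); case: (w (vs k)); apply/orP; [right|left];
  apply/eqP; congr (inr (idx (_, _))); exact: val_inj.
Qed.

Lemma BB_pi : is_pi_obdd rk BB.
Proof.
split.
  move=> i; have : ev i \in NS by apply: enum_valP.
  case E: (ev i) => [k g]; rewrite inE /= => /imsetP[w _ eg].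
  have -> : i = idx (Ordinal (ltn_ord k), restr k w).
    by rewrite -[i]evK E eg; congr (idx (_, _)); exact: val_inj.
  exact: BB_connect.
move=> i j; rewrite /=.
have iN : ev i \in NS by apply: enum_valP.
suff H : forall b, tgt (ev i) b = inr j -> rk (vs (ev i).1) < rk (vs (ev j).1).
  by case=> /H.
move=> b; rewrite /tgt; case: insubP => [k' _ ek'|] // [<-].
by rewrite idxK ?tgt_in //= !rk_vs // ek'.
Qed.

Lemma card_NS : m <= \sum_(k < K) #|SubF k|.
Proof.
rewrite /m -sum1_card /NS.
rewrite (eq_bigl (fun u : NT => u.2 \in SubF u.1)); last by move=> u; rewrite inE.
rewrite -(pair_big_dep xpredT (fun (k : 'I_K) (g : sfun) => g \in SubF k) (fun _ _ => 1)) /=.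
by apply: leq_sum => k _; rewrite sum1_card.
Qed.

Lemma generic_obdd : exists (m : nat) (B : obdd V m),
  [/\ is_pi_obdd rk B, represents B F & m <= \sum_(k < K) #|SubF k|].
Proof. exists m, BB; split; [exact: BB_pi | exact: BB_represents | exact: card_NS]. Qed.

End Generic.


Lemma sum_split (f : nat -> nat) l n : l <= n ->
  \sum_(i < n) f i = \sum_(i < l) f i + \sum_(i < n - l) f (l + i).
Proof. move=> ln; have := subnKC ln; move: (n - l) => k <-; by rewrite big_split_ord. Qed.

Lemma sum_bool_le (P : nat -> bool) n : \sum_(i < n) (P i : nat) <= n.
Proof.
elim: n => [|n IH]; first by rewrite big_ord0.
rewrite big_ord_recr /=; case: (P n); [by rewrite addn1 ltnS | by rewrite addn0 (leq_trans IH)].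
Qed.

Lemma sum_const1 n : \sum_(i < n) 1 = n.
Proof. by rewrite sum_nat_const card_ord muln1. Qed.

Lemma prefix_sum (P : nat -> bool) N Y :
  (forall i j, i <= j -> j < N -> P j -> P i) -> Y < N ->
  (Y < \sum_(i < N) (P i : nat)) = P Y.
Proof.
move=> dc YN; rewrite (sum_split (fun i => (P i : nat)) YN) big_ord_recr /=.
case PY: (P Y).
  have -> : \sum_(i < Y) (P i : nat) = Y.
    rewrite -[RHS]sum_const1; apply: eq_bigr => i _.
    by rewrite (dc i Y) // ltnW.
  lia.
have -> : \sum_(i < N - Y.+1) (P (Y.+1 + i) : nat) = 0.
  apply: big1 => i _; case E: (P _) => //.
  by move: PY; rewrite (dc Y (Y.+1 + i)) // ?leq_addr //; move: (ltn_ord i); lia.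
by rewrite addn0 addn0 ltnNge sum_bool_le.
Qed.

Lemma sum_int (Q lo hi : nat) : \sum_(q < Q) (lo <= q <= hi : nat) <= hi.+1 - lo.
Proof.
suff : \sum_(q < Q) (lo <= q <= hi : nat) = minn Q hi.+1 - lo by move=> ->; lia.
elim: Q => [|Q IH]; first by rewrite big_ord0.
rewrite big_ord_recr /= IH; case: (boolP (lo <= Q)) => h1; case: (boolP (Q <= hi)) => h2 /=; lia.
Qed.

Lemma sum_prefix (g : nat -> nat) (Q P : nat) :
  \sum_(p < Q) ((p < P) * g p) <= \sum_(p < P) g p.
Proof.
case: (leqP Q P) => h.
  apply: leq_trans (_ : \sum_(p < Q) g p <= _).
    by apply: leq_sum => p _; case: (p < P); rewrite ?mul1n ?mul0n.
  by rewrite [X in _ <= X](sum_split g h) leq_addr.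
rewrite (sum_split (fun p => (p < P) * g p) (ltnW h)).
rewrite [X in _ + X]big1 ?addn0; last by move=> i _; have -> : (P + i < P) = false by lia.
by apply: leq_sum => p _; rewrite ltn_ord mul1n.
Qed.

Lemma sumn_geom (K x : nat) : \sum_(k < K) x %/ 2 ^ k.+1 <= x.
Proof.
elim: K x => [|K IH] x; first by rewrite big_ord0.
rewrite big_ord_recl /=.
have -> : \sum_(i < K) x %/ 2 ^ (bump 0 i).+1 = \sum_(i < K) (x %/ 2) %/ 2 ^ i.+1.
  by apply: eq_bigr => i _; rewrite /bump /= add1n expnS divnMA.
apply: leq_trans (leq_add (leqnn _) (IH _)) _.
by rewrite expn1; have := divn_eq x 2; lia.
Qed.

Lemma image_factor (T U W : finType) (f : T -> U) (g : T -> W) (A : {pred T}) :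
  (forall a b, g a = g b -> f a = f b) -> #|f @: A| <= #|g @: A|.
Proof.
move=> fg; case: (pickP A) => [a0 a0A|A0].
  2: by apply: leq_trans (leq_imset_card _ _) _; rewrite eq_card0.
pose h (u : U) := g (odflt a0 [pick a in A | f a == u]).
have hP : forall a, a \in A -> exists2 b, b \in A & (h (f a) = g b /\ f b = f a).
  move=> a aA; rewrite /h; case: pickP => [b /andP[bA /eqP fb]|/(_ a)] /=.
    by exists b.
  by rewrite aA eqxx.
have -> : #|f @: A| = #|h @: (f @: A)|.
  apply/esym/card_in_imset => u1 u2 /imsetP[a1 a1A ->] /imsetP[a2 a2A ->].
  case: (hP a1 a1A) => b1 _ [-> <-]; case: (hP a2 a2A) => b2 _ [-> <-].
  exact: fg.
apply: subset_leq_card; apply/subsetP => w /imsetP[u /imsetP[a aA ->] ->].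
by case: (hP a aA) => b bA [-> _]; apply: imset_f.
Qed.

Lemma mono_det (L : nat) (c c' : nat -> nat) :
  (forall i j, i <= j -> j < L -> c i <= c j) ->
  (forall i j, i <= j -> j < L -> c' i <= c' j) ->
  (forall i, i < L -> exists2 j, j < L & i + c i = j + c' j) ->
  (forall i, i < L -> exists2 j, j < L & i + c' i = j + c j) ->
  forall i, i < L -> c i = c' i.
Proof.
move=> mc mc' h1 h2; elim/ltn_ind => i IH iL.
case: (h1 i iL) => j jL e.
case: (ltngtP j i) => ji.
- have := IH j ji; have := mc j i (ltnW ji) iL; lia.
- case: (h2 i iL) => k kL e2.
  have := mc' i j (ltnW ji) jL.
  case: (ltnP k i) => ki.
    have := IH k ki; have := mc' k i (ltnW ki) iL; lia.
  have := mc i k ki kL; lia.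
- by move: e; rewrite ji; lia.
Qed.

Lemma sum_split2 (f : nat -> nat) l m n : l + m = n ->
  \sum_(i < n) f i = \sum_(i < l) f i + \sum_(i < m) f (l + i).
Proof. by move=> <-; rewrite big_split_ord. Qed.

Lemma bits_lt (f : nat -> bool) l : \sum_(i < l) f i * 2 ^ i < 2 ^ l.
Proof.
elim: l => [|l IH]; first by rewrite big_ord0.
rewrite big_ord_recr /= expnS.
case: (f l) => /=; rewrite mul2n -addnn ?mul1n ?mul0n ?addn0 ?ltn_add2r //.
by apply: (leq_trans IH); rewrite leq_addr.
Qed.

Lemma sum_pairs (s : nat -> nat) n :
  \sum_(k < n.*2) s k = \sum_(j < n) (s j.*2 + s j.*2.+1).
Proof.
elim: n => [|n IH]; first by rewrite !big_ord0.
by rewrite doubleS !big_ord_recr /= IH addnA.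
Qed.


Section Graph.
Variables (R : realFieldType) (N : nat) (a : nat -> R).
Hypothesis N_gt0 : 0 < N.
Hypothesis amono : forall i j, i < j < N -> (a i < a j)%R.

Definition G X Y := [&& X < N, Y < N & uig_adj a X Y].
Definition H X := \sum_(i < N) ((a i <= a (minn X N.-1) + 1)%R : nat).

Lemma a_le i j : i <= j -> j < N -> (a i <= a j)%R.
Proof.
rewrite leq_eqVlt => /orP[/eqP -> //|ij] jN.
by apply: ltW; apply: amono; rewrite ij jN.
Qed.

Lemma H_mono X Y : X <= Y -> H X <= H Y.
Proof.
move=> XY; rewrite /H; apply: (@leq_sum _ _ _ (fun i : 'I_N => ((a i <= a (minn X N.-1) + 1)%R : nat))) => i _.
have h : (a (minn X N.-1) <= a (minn Y N.-1))%R.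
  by apply: a_le; lia.
case: (boolP (a i <= _)%R) => // h1.
by have -> : (a i <= a (minn Y N.-1) + 1)%R by lra.
Qed.

Lemma H_le X : H X <= N.
Proof. exact: (sum_bool_le (fun i => (a i <= a (minn X N.-1) + 1)%R)). Qed.

Lemma H_char X Y : X < Y -> Y < N -> (Y < H X) = (a Y <= a X + 1)%R.
Proof.
move=> XY YN; rewrite /H (_ : minn X N.-1 = X); last by lia.
rewrite (@prefix_sum (fun i => (a i <= a X + 1)%R) N Y) // => i j ij jN h.
have := a_le ij jN; lra.
Qed.

Lemma G_sym X Y : G X Y = G Y X.
Proof.
rewrite /G /uig_adj eq_sym distrC.
by case: (X < N); case: (Y < N).
Qed.

Lemma G_char X Y : G X Y = [&& X < N, Y < N, X != Y & maxn X Y < H (minn X Y)].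
Proof.
wlog XY : X Y / X <= Y.
  move=> hw; case: (boolP (X <= Y)) => h; first exact: hw.
  rewrite G_sym hw; last by lia.
  rewrite maxnC minnC eq_sym.
  by case: (X < N); case: (Y < N).
rewrite /G /uig_adj.
case: (boolP (X < N)) => //= XN; case: (boolP (Y < N)) => //= YN.
case: (eqVneq X Y) => //= nXY.
have lt : X < Y by lia.
rewrite (maxn_idPr XY) (minn_idPl XY) H_char //.
have := amono (i:=X) (j:=Y); rewrite lt YN => /(_ isT) h.
rewrite distrC ger0_norm; last lra.
by apply/idP/idP; lra.
Qed.

Section Blocks.
Variables (L Q : nat).
Hypothesis L_gt0 : 0 < L.

Definition Bf (p q : nat) : {ffun 'I_L * 'I_L -> bool} :=
  [ffun xy : 'I_L * 'I_L => G (p * L + xy.1) (q * L + xy.2)].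
Definition Img := [set Bf pq.1 pq.2 | pq : 'I_Q * 'I_Q].
Definition Bfalse : {ffun 'I_L * 'I_L -> bool} := [ffun _ => false].
Definition Btrue : {ffun 'I_L * 'I_L -> bool} := [ffun _ => true].

Definition P := N %/ L.
Definition phi p := H (p * L) %/ L.
Definition cross p q := [&& p < P, H (p * L) < q.+1 * L & q * L < H (p.+1 * L)].

Lemma exists_true p q : Bf p q != Bfalse ->
  exists x y, [/\ x < L, y < L & G (p * L + x) (q * L + y)].
Proof.
move=> h; have : [exists xy, Bf p q xy].
  apply: contraNT h => /existsPn hn; apply/eqP/ffunP => xy.
  by rewrite [RHS]ffunE; apply/negbTE.
case/existsP => [[x y]]; rewrite ffunE => g.
by exists x, y; split.
Qed.

Lemma exists_false p q : Bf p q != Btrue ->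
  exists x y, [/\ x < L, y < L & ~~ G (p * L + x) (q * L + y)].
Proof.
move=> h; have : [exists xy, ~~ Bf p q xy].
  apply: contraNT h => /existsPn hn; apply/eqP/ffunP => xy.
  by rewrite [RHS]ffunE; apply/negPn.
case/existsP => [[x y]]; rewrite ffunE => g.
by exists x, y; split.
Qed.

Lemma PL_le : P * L <= N.
Proof. exact: leq_trunc_div. Qed.

Lemma le_P p : p * L < N -> p <= P.
Proof. by move=> h; rewrite /P leq_divRL // ltnW. Qed.

Lemma cross_helper s r x y x' y' : s < r -> r < P ->
  x < L -> y < L -> x' < L -> y' < L ->
  G (s * L + x) (r * L + y) -> ~~ G (s * L + x') (r * L + y') -> cross s r.
Proof.
move=> sr rP xL yL x'L y'L g1 g2.
have h1 : s.+1 * L <= r * L by rewrite leq_mul2r sr orbT.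
have h2 : r.+1 * L <= P * L by rewrite leq_mul2r rP orbT.
have h3 := PL_le.
move: h1 h2; rewrite !mulSn => h1 h2.
have sP : s < P by lia.
move: g1 g2; rewrite !G_char.
rewrite (maxn_idPr (_ : s * L + x <= r * L + y)); last by lia.
rewrite (minn_idPl (_ : s * L + x <= r * L + y)); last by lia.
rewrite (maxn_idPr (_ : s * L + x' <= r * L + y')); last by lia.
rewrite (minn_idPl (_ : s * L + x' <= r * L + y')); last by lia.
case/and4P => _ _ _ t1.
have A : s * L + x' < N by lia.
have B : r * L + y' < N by lia.
have C : s * L + x' != r * L + y' by apply/eqP; lia.
rewrite A B C /= -leqNgt => t2.
have m1 := H_mono (_ : s * L + x <= L + s * L).
have m2 := H_mono (_ : s * L <= s * L + x').
rewrite /cross sP /= !mulSn.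
have := m1 ltac:(lia); have := m2 ltac:(lia).
lia.
Qed.

Lemma nontriv p q : Bf p q != Bfalse -> Bf p q != Btrue ->
  [|| (p == q) && (p <= P), (p == P) && (q <= P), (q == P) && (p <= P),
      cross p q | cross q p].
Proof.
case/exists_true => x [y [xL yL g1]]; case/exists_false => x' [y' [x'L y'L g2]].
have [pN qN] : p * L < N /\ q * L < N.
  by move: g1; rewrite /G => /and3P[h1 h2 _]; lia.
have pP := le_P pN; have qP := le_P qN.
case: (eqVneq p q) => [e|pq]; first by rewrite e qP.
case: (eqVneq p P) => [e|pnP]; first by rewrite e qP orbT.
case: (eqVneq q P) => [e|qnP]; first by rewrite e pP !orbT.
have pP' : p < P by lia.
have qP' : q < P by lia.
case: (ltngtP p q) => h.
- by rewrite (cross_helper h qP' xL yL x'L y'L g1 g2) !orbT.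
- rewrite G_sym in g1; rewrite G_sym in g2.
  by rewrite (cross_helper h pP' yL xL y'L x'L g1 g2) !orbT.
- by move: pq; rewrite h eqxx.
Qed.

Lemma cross_range p q : cross p q -> (p < P) && (phi p <= q <= phi p.+1).
Proof.
case/and3P => pP h1 h2; rewrite pP /phi /=.
apply/andP; split.
  by rewrite -ltnS ltn_divLR.
by rewrite leq_divRL // ltnW.
Qed.

Lemma phi_mono : {homo phi : x y / x <= y}.
Proof. by move=> x y xy; apply: leq_div2r; apply: H_mono; rewrite leq_mul2r xy orbT. Qed.

Lemma sum_cross : \sum_(p < Q) \sum_(q < Q) (cross p q : nat) <= N %/ L + P.
Proof.
apply: leq_trans (_ : \sum_(p < Q) ((p < P) * ((phi p.+1).+1 - phi p)) <= _).
  apply: leq_sum => p _.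
  apply: leq_trans (_ : \sum_(q < Q) ((p < P) * (phi p <= q <= phi p.+1)) <= _).
    apply: leq_sum => q _.
    by case: (boolP (cross p q)) => // /cross_range /andP[-> ->].
  by rewrite -big_distrr /= leq_mul2l sum_int orbT.
apply: leq_trans (sum_prefix (fun p => (phi p.+1).+1 - phi p) Q P) _.
have e : forall p, (phi p.+1).+1 - phi p = (phi p.+1 - phi p) + 1.
  by move=> p; have := phi_mono (leqnSn p); lia.
under eq_bigr => p _ do rewrite e.
rewrite big_split /= sum_const1.
rewrite -(big_mkord xpredT (fun p => phi p.+1 - phi p)) telescope_sumn; last exact: phi_mono.
have : phi P <= N %/ L by rewrite /phi leq_div2r // H_le.
lia.
Qed.

Lemma card_NTs :
  #|[set pq : 'I_Q * 'I_Q | (Bf pq.1 pq.2 != Bfalse) && (Bf pq.1 pq.2 != Btrue)]|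
    <= 7 * (N %/ L) + 3.
Proof.
rewrite -sum1_card big_mkcond /=.
rewrite (eq_bigr (fun pq : 'I_Q * 'I_Q =>
   (((Bf pq.1 pq.2 != Bfalse) && (Bf pq.1 pq.2 != Btrue)) : nat))); last first.
  by move=> pq _; rewrite inE; case: (_ && _).
rewrite -(pair_big xpredT xpredT (fun (p q : 'I_Q) =>
   (((Bf p q != Bfalse) && (Bf p q != Btrue)) : nat))) /=.
pose D1 (p q : nat) := ((p <= q <= p) * (0 <= p <= P)).
pose D2 (p q : nat) := ((P <= p <= P) * (0 <= q <= P)).
pose D3 (p q : nat) := ((0 <= p <= P) * (P <= q <= P)).
apply: leq_trans (_ : \sum_(p < Q) \sum_(q < Q)
   (D1 p q + D2 p q + D3 p q + cross p q + cross q p) <= _).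
  apply: leq_sum => p _; apply: leq_sum => q _.
  case: (boolP (_ && _)) => // /andP[h1 h2].
  have := nontriv h1 h2; rewrite /D1 /D2 /D3.
  case/orP => [/andP[/eqP e pP]|/orP[/andP[/eqP e pP]|/orP[/andP[/eqP e pP]|/orP[->|->]]]];
    rewrite ?addn1 //; try lia.
rewrite (eq_bigr _ (fun p _ => big_split _ _ _ _ _)) big_split /=.
rewrite (eq_bigr _ (fun p _ => big_split _ _ _ _ _)) big_split /=.
rewrite (eq_bigr _ (fun p _ => big_split _ _ _ _ _)) big_split /=.
rewrite (eq_bigr _ (fun p _ => big_split _ _ _ _ _)) big_split /=.
have S1 : \sum_(p < Q) \sum_(q < Q) D1 p q <= P.+1.
  apply: leq_trans (_ : \sum_(p < Q) (0 <= p <= P : nat) <= _); last first.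
    by apply: leq_trans (sum_int _ _ _) _; rewrite subn0.
  apply: leq_sum => p _; rewrite /D1 -big_distrl /=.
  have := sum_int Q p p; rewrite subSnn => h; case: (p <= P); rewrite ?muln1 ?muln0 //.
have S2 : \sum_(p < Q) \sum_(q < Q) D2 p q <= P.+1.
  rewrite /D2 (eq_bigr _ (fun p _ => esym (big_distrr _ _ _))) -big_distrl /=.
  have := sum_int Q P P; have := sum_int Q 0 P; rewrite subSnn subn0 /=; nia.
have S3 : \sum_(p < Q) \sum_(q < Q) D3 p q <= P.+1.
  rewrite /D3 (eq_bigr _ (fun p _ => esym (big_distrr _ _ _))) -big_distrl /=.
  have := sum_int Q P P; have := sum_int Q 0 P; rewrite subSnn subn0 /=; nia.
have S4 := sum_cross.
have S5 : \sum_(p < Q) \sum_(q < Q) (cross q p : nat) <= N %/ L + P.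
  by rewrite exchange_big.
rewrite /P in S1 S2 S3 S4 S5 *.
apply: leq_trans (leq_add (leq_add (leq_add (leq_add S1 S2) S3) S4) S5) _.
lia.
Qed.

Lemma Img_bound_a : #|Img| <= 7 * (N %/ L) + 5.
Proof.
set NTs := [set pq : 'I_Q * 'I_Q | (Bf pq.1 pq.2 != Bfalse) && (Bf pq.1 pq.2 != Btrue)].
have sub : Img \subset Bfalse |: (Btrue |: [set Bf pq.1 pq.2 | pq : 'I_Q * 'I_Q in NTs]).
  apply/subsetP => f /imsetP[pq _ ->].
  rewrite !inE; case: eqP => //= h1; case: eqP => //= h2.
  by apply/imsetP; exists pq => //; rewrite inE; apply/andP; split; apply/eqP.
apply: leq_trans (subset_leq_card sub) _.
rewrite cardsU1 cardsU1.
apply: leq_trans (_ : 1 + (1 + (7 * (N %/ L) + 3)) <= _); last lia.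
apply: leq_add; first exact: leq_b1.
apply: leq_add; first exact: leq_b1.
exact: leq_trans (leq_imset_card _ _) card_NTs.
Qed.

Definition cvec p q (i : nat) := minn (H (minn p q * L + i) - maxn p q * L) L.
Definition cX p := minn (N - p * L) L.
Definition Sset p q : {ffun 'I_(L.*2).+1 -> bool} :=
  [ffun t : 'I_(L.*2).+1 => [exists i : 'I_L, (t : nat) == i + cvec p q i]].
Definition key p q : (bool * bool * 'I_L.+1 * 'I_L.+1 * {ffun 'I_(L.*2).+1 -> bool}) :=
  (p == q, p < q, inord (cX p), inord (cX q), Sset p q).

Lemma Bf_formula p q x y : x < L -> y < L ->
  G (p * L + x) (q * L + y) =
  [&& x < cX p, y < cX q &
     (if p == q then (x != y) && (maxn x y < cvec p q (minn x y))
      else if p < q then y < cvec p q x else x < cvec p q y)].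
Proof.
move=> xL yL; rewrite G_char /cvec /cX.
have -> : (p * L + x < N) = (x < minn (N - p * L) L) by lia.
have -> : (q * L + y < N) = (y < minn (N - q * L) L) by lia.
congr (_ && (_ && _)).
case: (ltngtP p q) => pq.
- have h : p.+1 * L <= q * L by rewrite leq_mul2r pq orbT.
  rewrite mulSn in h.
  rewrite (maxn_idPr (_ : p * L + x <= q * L + y)); last by lia.
  rewrite (minn_idPl (_ : p * L + x <= q * L + y)); last by lia.
  have -> : (p * L + x != q * L + y) = true by apply/eqP; lia.
  rewrite /=; lia.
- have h : q.+1 * L <= p * L by rewrite leq_mul2r pq orbT.
  rewrite mulSn in h.
  rewrite (maxn_idPl (_ : q * L + y <= p * L + x)); last by lia.
  rewrite (minn_idPr (_ : q * L + y <= p * L + x)); last by lia.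
  have -> : (p * L + x != q * L + y) = true by apply/eqP; lia.
  rewrite /=; lia.
- rewrite pq -addn_maxr -addn_minr.
  have -> : (q * L + x != q * L + y) = (x != y) by rewrite eqn_add2l.
  case: (x != y) => //=; lia.
Qed.

Lemma cvec_le p q i : cvec p q i <= L.
Proof. exact: geq_minr. Qed.

Lemma cvec_mono p q i j : i <= j -> cvec p q i <= cvec p q j.
Proof.
move=> ij; rewrite /cvec.
have := H_mono (_ : minn p q * L + i <= minn p q * L + j); rewrite leq_add2l => /(_ ij).
lia.
Qed.

Lemma Sset_in p q i : i < L -> Sset p q (inord (i + cvec p q i)) = true.
Proof.
move=> iL; rewrite ffunE; apply/existsP; exists (Ordinal iL).
rewrite inordK //=; have := cvec_le p q i; lia.
Qed.

Lemma Sset_out p q t : t < (L.*2).+1 -> Sset p q (inord t) ->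
  exists2 j, j < L & t = j + cvec p q j.
Proof.
move=> tL; rewrite ffunE => /existsP[j /eqP e]; exists j => //.
by rewrite -e inordK.
Qed.

Lemma key_det p q p' q' : key p q = key p' q' -> Bf p q = Bf p' q'.
Proof.
case=> e1 e2 e3 e4 e5.
have cXe : forall r r', inord (cX r) = inord (cX r') :> 'I_L.+1 -> cX r = cX r'.
  have h : forall r, cX r < L.+1 by move=> r; rewrite ltnS geq_minr.
  by move=> r r' /(congr1 val) /=; rewrite !inordK ?h.
have {}e3 := cXe _ _ e3; have {}e4 := cXe _ _ e4.
have ce : forall i, i < L -> cvec p q i = cvec p' q' i.
  apply: (mono_det (L := L)).
  - by move=> i j ij _; apply: cvec_mono.
  - by move=> i j ij _; apply: cvec_mono.
  - move=> i iL; have := Sset_in p q iL; rewrite e5 => /Sset_out.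
    by apply; have := cvec_le p q i; lia.
  - move=> i iL; have := Sset_in p' q' iL; rewrite -e5 => /Sset_out.
    case; first by have := cvec_le p' q' i; lia.
    by move=> j jL ->; exists j.
apply/ffunP => [[x y]]; rewrite !ffunE /= !Bf_formula // e1 e2 e3 e4.
rewrite !ce //; last by rewrite gtn_min ltn_ord.
Qed.

Lemma Img_bound_b : #|Img| <= 4 * (L.+1 * L.+1) * 2 ^ (L.*2).+1.
Proof.
apply: leq_trans (image_factor (f := fun pq : 'I_Q * 'I_Q => Bf pq.1 pq.2)
   (g := fun pq : 'I_Q * 'I_Q => key pq.1 pq.2) _ _) _.
  by move=> [p q] [p' q'] /= /key_det.
apply: leq_trans (max_card _) _.
rewrite !card_prod !card_bool !card_ord card_ffun card_bool card_ord.
lia.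
Qed.

End Blocks.
End Graph.


Section Spec.
Variables (R : realFieldType) (N : nat) (a : nat -> R).
Local Notation n := (nbits N).
Hypothesis hn : 0 < n.

Definition o0 : 'I_n := Ordinal hn.
Definition vs (k : nat) : xyvar n := (odd k, insubd o0 (n.-1 - k./2)).
Local Notation rk := (@interleaved_rank n).
Local Notation F := (@chiE R a N).

Lemma rk_vs k : k < n.*2 -> rk (vs k) = k.
Proof.
move=> kn; rewrite /interleaved_rank /vs /= val_insubd.
have -> : n.-1 - k./2 < n by lia.
have := odd_double_half k; have : k./2 < n.
  by rewrite -ltn_double; have := odd_double_half k; lia.
lia.
Qed.

Lemma rk_lt v : rk v < n.*2.
Proof. by case: v => b i; rewrite /interleaved_rank /=; move: (ltn_ord i); case: b => /=; lia. Qed.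

Lemma vs_rk v : vs (rk v) = v.
Proof.
case: v => b i; rewrite /vs /interleaved_rank /=.
rewrite oddD odd_double /= addnC half_bit_double.
congr (_, _); first by case: b.
apply: val_inj; rewrite val_insubd; have h := ltn_ord i; case: ifP => /= h2; lia.
Qed.

Lemma Fext (z z' : xyvar n -> bool) : (forall v, z v = z' v) -> F z = F z'.
Proof.
move=> h; rewrite /chiE.
have e : forall b, binval (fun i => z (b, i)) = binval (fun i => z' (b, i)).
  by move=> b; apply: eq_bigr => i _; rewrite h.
by rewrite !e.
Qed.

Definition bt (z : xyvar n -> bool) (b : bool) (i : nat) : bool :=
  if (insub i : option 'I_n) is Some o then z (b, o) else false.

Lemma binval_bt z b : binval (fun o => z (b, o)) = \sum_(i < n) bt z b i * 2 ^ i.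
Proof. by apply: eq_bigr => o _; rewrite /bt valK. Qed.

Lemma bt_mix j (w z : asg (xyvar n)) b i : j <= n ->
  bt (mix rk j.*2 w z) b i = if n - j <= i then bt w b i else bt z b i.
Proof.
move=> jn; rewrite /bt; case: insubP => [o io eo|ni]; last by case: ifP.
rewrite /mix /interleaved_rank /= -eo.
have -> : ((n.-1 - o).*2 + b < j.*2) = (n - j <= o).
  by move: (ltn_ord o); case: b => /=; lia.
by [].
Qed.

Definition lo j (z : xyvar n -> bool) b := \sum_(i < n - j) bt z b i * 2 ^ i.
Definition hi j (w : xyvar n -> bool) b := \sum_(i < j) bt w b (n - j + i) * 2 ^ i.

Lemma lo_lt j z b : lo j z b < 2 ^ (n - j).
Proof. exact: bits_lt. Qed.

Lemma hi_lt j w b : j <= n -> hi j w b < 2 ^ n.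
Proof.
move=> jn; apply: leq_trans (bits_lt (fun i => bt w b (n - j + i)) j) _.
by rewrite leq_exp2l.
Qed.

Lemma split_val j (w z : asg (xyvar n)) b : j <= n ->
  \sum_(i < n) bt (mix rk j.*2 w z) b i * 2 ^ i = hi j w b * 2 ^ (n - j) + lo j z b.
Proof.
move=> jn.
rewrite (sum_split2 (fun i => bt (mix rk j.*2 w z) b i * 2 ^ i) (_ : (n - j) + j = n));
  last by lia.
rewrite addnC; congr (_ + _).
  rewrite /hi big_distrl /=; apply: eq_bigr => i _.
  by rewrite bt_mix // leq_addr expnD -mulnA [2 ^ i * _]mulnC.
apply: eq_bigr => i _; rewrite bt_mix //.
by have -> : (n - j <= i) = false by move: (ltn_ord i); lia.
Qed.

Definition Phi j (beta : {ffun 'I_(2 ^ (n - j)) * 'I_(2 ^ (n - j)) -> bool}) : sfun (xyvar n) :=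
  [ffun z : asg (xyvar n) => beta (Ordinal (lo_lt j z false), Ordinal (lo_lt j z true))].

Lemma restr_eq j w : j <= n ->
  restr rk F j.*2 w = Phi (Bf N a (2 ^ (n - j)) (hi j w false) (hi j w true)).
Proof.
move=> jn; apply/ffunP => z; rewrite !ffunE /chiE /= !binval_bt !split_val //.
Qed.

Lemma card_level j : j <= n ->
  #|SubF rk F j.*2| <= #|Img N a (2 ^ (n - j)) (2 ^ n)|.
Proof.
move=> jn.
have sub : SubF rk F j.*2 \subset Phi (j := j) @: Img N a (2 ^ (n - j)) (2 ^ n).
  apply/subsetP => g /imsetP[w _ ->]; rewrite restr_eq //.
  apply: imset_f; apply/imsetP.
  by exists (Ordinal (hi_lt w false jn), Ordinal (hi_lt w true jn)).
exact: leq_trans (subset_leq_card sub) (leq_imset_card _ _).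
Qed.

End Spec.


Definition gB (L : nat) := 4 * (L.+1 * L.+1) * 2 ^ (L.*2).+1.
Definition gA (N L : nat) := 7 * (N %/ L) + 5.
Definition g N l := minn (gA N (2 ^ l)) (gB (2 ^ l)).

Lemma gB_le L : gB L <= 8 * 2 ^ (4 * L).
Proof.
rewrite /gB.
have h : L.+1 <= 2 ^ L by apply: ltn_expl.
have e1 : 2 ^ (L.*2).+1 = 2 * (2 ^ L * 2 ^ L) by rewrite expnS -expnD addnn.
have e2 : 2 ^ (4 * L) = 2 ^ L * 2 ^ L * (2 ^ L * 2 ^ L) by rewrite -!expnD; congr (2 ^ _); lia.
rewrite e1 e2; have h2 := leq_mul h h; move: h2; set E := 2 ^ L; set P := L.+1 * L.+1; set Q := E * E => h2.
have := leq_mul h2 (leqnn Q); nia.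
Qed.

Lemma geom_tail (x i0 n : nat) :
  \sum_(i < n) ((i0 <= i) * (x %/ 2 ^ i.+1)) <= x %/ 2 ^ i0.
Proof.
case: (leqP i0 n) => h.
  rewrite (sum_split2 (fun i => (i0 <= i) * (x %/ 2 ^ i.+1)) (_ : i0 + (n - i0) = n));
    last by lia.
  rewrite big1; last by move=> i _; have -> : (i0 <= i) = false by move: (ltn_ord i); lia. all: try by rewrite mul0n.
  rewrite add0n.
  apply: leq_trans (sumn_geom (n - i0) (x %/ 2 ^ i0)).
  apply: leq_sum => i _; rewrite leq_addr mul1n -addnS expnD divnMA.
  exact: leqnn.
rewrite big1 //; move=> i _; have -> : (i0 <= i) = false by move: (ltn_ord i); lia.
by rewrite mul0n.
Qed.

Lemma sum_g_bound N n i0 :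
  \sum_(i < n) g N i.+1 <= i0 * (8 * 2 ^ (4 * 2 ^ i0)) + 7 * (N %/ 2 ^ i0) + 5 * n.
Proof.
set X := 8 * 2 ^ (4 * 2 ^ i0).
apply: leq_trans (_ : \sum_(i < n) ((i < i0) * X + ((i0 <= i) * (7 * (N %/ 2 ^ i.+1)) + 5)) <= _).
  apply: leq_sum => i _; rewrite /g.
  case: (ltnP i i0) => h /=.
    rewrite mul1n; apply: leq_trans (geq_minr _ _) _.
    apply: leq_trans (gB_le _) _; apply: leq_trans (_ : X <= _); last exact: leq_addr.
    by rewrite leq_mul2l leq_exp2l // leq_mul2l leq_exp2l.
  rewrite mul1n mul0n add0n; exact: geq_minl.
rewrite big_split /= big_split /= sum_nat_const card_ord [5 * n]mulnC.
rewrite -addnA leq_add //.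
  apply: leq_trans (sum_prefix (fun _ => X) n i0) _.
  by rewrite sum_nat_const card_ord.
rewrite leq_add2r.
apply: leq_trans (_ : 7 * \sum_(i < n) ((i0 <= i) * (N %/ 2 ^ i.+1)) <= _).
  by rewrite big_distrr /=; apply: leq_sum => i _; rewrite mulnCA.
by rewrite leq_mul2l geom_tail orbT.
Qed.

Lemma poly_exp t : t.+1 <= 16 * 2 ^ (t %/ 16).
Proof.
have h : t %/ 16 < 2 ^ (t %/ 16) by apply: ltn_expl.
have := divn_eq t 16; have := ltn_pmod t (isT : 0 < 16); lia.
Qed.

Lemma final_num N t n i0 : 2 <= N -> t = trunc_log 2 N -> n = nbits N ->
  i0 = trunc_log 2 t - 6 ->
  (3 * (i0 * (8 * 2 ^ (4 * 2 ^ i0)) + 7 * (N %/ 2 ^ i0) + 5 * n) + 2) * t <= 13 * 1000 * N.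
Proof.
move=> N2 et en ei0.
have F1 : 2 ^ t <= N by rewrite et; apply: trunc_logP; lia.
have F2 : n <= t.+1.
  rewrite en et /nbits up_log_trunc_log //; rewrite ltnS; apply: leq_trunc_log; lia.
set E := 2 ^ (t %/ 16).
have hE := poly_exp t; rewrite -/E in hE.
have EE : E * E <= 2 ^ t by rewrite -expnD leq_exp2l //; lia.
have EEE : E * E * E <= 2 ^ t by rewrite -!expnD leq_exp2l //; lia.
have hX0 : forall k, k <= t %/ 16 -> 2 ^ k <= E by move=> k hk; rewrite leq_exp2l.
clearbody E.
have F3 : t * (N %/ 2 ^ i0) <= 128 * N.
  have tl : t < 2 ^ (i0 + 7).
    have h := trunc_log_ltn t (isT : 1 < 2).
    case: (leqP 6 (trunc_log 2 t)) => h6.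
      by apply: leq_trans h _; rewrite leq_exp2l //; rewrite ei0; lia.
    apply: leq_trans h _; rewrite leq_exp2l //; lia.
  apply: leq_trans (_ : 2 ^ (i0 + 7) * (N %/ 2 ^ i0) <= _).
    by rewrite leq_mul2r ltnW // orbT.
  rewrite expnD mulnC mulnA [_ * 2 ^ i0]mulnC.
  have := leq_trunc_div N (2 ^ i0); rewrite mulnC.
  move: (N %/ 2 ^ i0 * 2 ^ i0) => y; lia.
have F4 : i0 * (2 ^ (4 * 2 ^ i0)) * t <= 256 * 2 ^ t.
  case: (posnP i0) => [->|i0p]; first by rewrite mul0n mul0n.
  have tl : 2 ^ (i0 + 6) <= t.
    have tp : 0 < t by move: i0p; rewrite ei0; case: (t) => //.
    apply: leq_trans (trunc_logP (isT : 1 < 2) tp); rewrite leq_exp2l //; rewrite ei0; lia.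
  have hi0 : i0 <= t.
    apply: leq_trans (ltnW (ltn_expl i0 (isT : 1 < 2))) _.
    by apply: leq_trans tl; rewrite leq_exp2l // leq_addr.
  have hX : 2 ^ (4 * 2 ^ i0) <= E.
    apply: hX0; rewrite leq_divRL //; move: tl; rewrite expnD; lia.
  have ht : t <= 16 * E by lia.
  apply: leq_trans (_ : t * E * t <= _).
    by apply: leq_mul => //; apply: leq_mul.
  apply: leq_trans (_ : 256 * (E * E * E) <= _); last by rewrite leq_mul2l EEE orbT.
  rewrite mulnAC; apply: leq_trans (leq_mul (leq_mul ht ht) (leqnn E)) _.
  by apply: eq_leq; ring.
have F5 : t.+1 * t <= 256 * 2 ^ t.
  apply: leq_trans (_ : 256 * (E * E) <= _); last by rewrite leq_mul2l EE orbT.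
  apply: leq_trans (leq_mul hE (ltnW hE)) _.
  by apply: eq_leq; ring.
set D := N %/ 2 ^ i0 in F3 *.
set X := 2 ^ (4 * 2 ^ i0) in F4 *.
have F6 : n * t <= t.+1 * t by rewrite leq_mul2r F2 orbT.
have F7 : t <= N by apply: leq_trans F1; apply: ltnW; apply: ltn_expl.
move: F1 F3 F4 F5 F6 F7.
move: (2 ^ t) => T F1 F3 F4 F5 F6 F7.
have -> : (3 * (i0 * (8 * X) + 7 * D + 5 * n) + 2) * t =
  24 * (i0 * X * t) + 21 * (t * D) + 15 * (n * t) + 2 * t by ring.
move: F3 F4 F5 F6; move: (i0 * X * t) (t * D) (n * t) (t.+1 * t) => p1 p2 p3 p4 F3 F4 F5 F6.
lia.
Qed.


Theorem mainTheorem2 :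
  exists c : nat, 0 < c /\
  forall (R : realFieldType) (N : nat) (a : nat -> R),
    2 <= N ->
    (forall i j, i < j < N -> (a i < a j)%R) ->
    (forall i j, i < N -> j < N -> (a i + 1 != a j)%R) ->
    exists (m : nat) (B : obdd (xyvar (nbits N)) m),
      [/\ is_pi_obdd (@interleaved_rank (nbits N)) B,
          represents B (@chiE R a N) &
          obdd_size B * trunc_log 2 N <= c * N].
Proof.
exists (13 * 1000); split => // R N a N2 amono _.
have N0 : 0 < N by lia.
have hn : 0 < nbits N by rewrite /nbits up_log_gt0; apply/andP; split.
have K0 : 0 < (nbits N).*2 by rewrite double_gt0.
have [m [B [Bpi Brep Bm]]] := generic_obdd K0 (rk_vs hn) (rk_lt hn) (vs_rk hn) (@Fext R N a).
exists m, B; split => //.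
set n := nbits N in hn K0 Bm *.
set t := trunc_log 2 N.
set i0 := trunc_log 2 t - 6.
have Hm : m <= 3 * \sum_(i < n) g N i.+1.
  apply: leq_trans Bm _; rewrite (sum_pairs (fun k => #|SubF (@interleaved_rank n) (@chiE R a N) k|)).
  apply: leq_trans (_ : \sum_(j < n) 3 * #|SubF (@interleaved_rank n) (@chiE R a N) j.*2| <= _).
    apply: leq_sum => j _.
    have := card_SubS (rk_vs hn) (vs_rk hn) (@Fext R N a) (k := j.*2) ltac:(rewrite ltn_double; exact: ltn_ord).
    rewrite -/n; lia.
  rewrite -big_distrr leq_mul2l; apply/orP; right.
  rewrite [X in _ <= X](reindex_inj rev_ord_inj) /=.
  apply: leq_sum => j _.
  have jn : j < n := ltn_ord j.
  have -> : (n - j.+1).+1 = n - j by lia.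
  apply: leq_trans (card_level a hn (ltnW jn)) _.
  rewrite /g leq_min; apply/andP; split.
    by rewrite -/n /gA; apply: Img_bound_a => //; rewrite expn_gt0.
  by rewrite -/n /gB; apply: Img_bound_b => //; rewrite expn_gt0.
have S := sum_g_bound N n i0.
have Fn := final_num N2 (erefl t) (erefl n) (erefl i0).
rewrite /obdd_size.
apply: leq_trans Fn.
rewrite leq_mul2r; apply/orP; right.
lia.
Qed.
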